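(* Let $a,b\in \mathcal{A}^{\mathrm{gcEP}}$. Then the following are equivalent: (1) $a\leq^{\mathrm{gcEP}}b$. (2) There exist $e_1=aa^{\mathrm{gcEP}}$ and $e_2=e_2^*=e_2^2$ such that $a=\begin{pmatrix} t_1&s_1&s_2\\ 0&n_1&n_2\\ 0&n_3&n_4\end{pmatrix}_{e\times e}$, $b=\begin{pmatrix} t_1&s_1&s_2\\ 0&t_3&t_4\\ 0&0&t_5\end{pmatrix}_{e\times e}$, where $e=\{ e_1,e_2,1-e_1-e_2\}$, $t_1\in (e_1\mathcal{A}e_1)^{-1}$, $t_3\in (e_2\mathcal{A}e_2)^{-1}$ and $n_1+n_2+n_3+n_4,\ t_5\in \mathcal{A}^{qnil}$.
   Context: $\mathcal{A}$ is a complex Banach *-algebra with identity; $\mathcal{A}^{qnil}$ is the set of quasinilpotent elements. An element $a$ has a generalized core-EP inverse if there is $x$ with $x=ax^2$, $(ax)^*=ax$, $\lim_{n\to\infty}\|a^n-xa^{n+1}\|^{1/n}=0$; this $x$ is unique, denoted $a^{\mathrm{gcEP}}$, and $\mathcal{A}^{\mathrm{gcEP}}$ is the set of such $a$. For $a,b\in\mathcal{A}^{\mathrm{gcEP}}$, $a\leq^{\mathrm{gcEP}}b$ means $aa^{\mathrm{gcEP}}=ba^{\mathrm{gcEP}}$ and $a^{\mathrm{gcEP}}a=a^{\mathrm{gcEP}}b$. For a set $e=\{e_1,\dots,e_n\}$ of idempotents with $1=e_1+\cdots+e_n$ and $e_ie_j=0$ ($i\neq j$), an element $x$ is written in matrix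 form $x=(e_ixe_j)_{e\times e}$. *)

(* Defs.v *)
From HB Require Import structures.
From mathcomp Require Import all_boot all_order all_algebra.
From mathcomp Require Import all_classical all_reals.
From mathcomp Require Import topology normedtype sequences exp.
From mathcomp Require Import complex.
Set Implicit Arguments. Unset Strict Implicit. Unset Printing Implicit Defensive.
Import Order.TTheory GRing.Theory Num.Theory.
Local Open Scope ring_scope.
Local Open Scope complex_scope.
Local Open Scope classical_set_scope.
Import numFieldNormedType.Exports.

HB.mixin Record isBanachStarAlgebra (R : realType) A of GRing.Algebra R[i] A := {
  bnorm : A -> R;
  star : A -> A;
  bnormD : forall x y : A, bnorm (x + y) <= bnorm x + bnorm y;
  bnormZ : forall (c : R[i]) (x : A), bnorm (c *: x) = ComplexField.Normc.normc c * bnorm x;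
  bnorm_eq0 : forall x : A, bnorm x = 0 -> x = 0;
  bnormM : forall x y : A, bnorm (x * y) <= bnorm x * bnorm y;
  bnorm1 : bnorm 1 = 1;
  bnorm_complete : forall u : nat -> A,
    (forall e : R, 0 < e -> exists N : nat, forall m n : nat,
        (N <= m)%N -> (N <= n)%N -> bnorm (u m - u n) < e) ->
    exists l : A, forall e : R, 0 < e -> exists N : nat, forall n : nat,
        (N <= n)%N -> bnorm (u n - l) < e;
  starD : forall x y : A, star (x + y) = star x + star y;
  starZ : forall (c : R[i]) (x : A), star (c *: x) = conjc c *: star x;
  starM : forall x y : A, star (x * y) = star y * star x;
  starK : forall x : A, star (star x) = x
}.

#[short(type="banachStarAlgType")]
HB.structure Definition BanachStarAlgebra (R : realType) :=
  { A of isBanachStarAlgebra R A & GRing.Algebra R[i] A }.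

Section Defs.
Variables (R : realType) (A : banachStarAlgType R).

Definition qnil (a : A) : Prop :=
  (fun n : nat => (bnorm (a ^+ n)) `^ (n%:R^-1)) @ \oo --> (0 : R).

Definition is_gcEP (a x : A) : Prop :=
  [/\ x = a * x ^+ 2, star (a * x) = a * x &
      (fun n : nat => (bnorm (a ^+ n - x * a ^+ n.+1)) `^ (n%:R^-1))
        @ \oo --> (0 : R)].

Definition has_gcEP (a : A) : Prop := exists x, is_gcEP a x.

(* a^gcEP (the unique gcEP inverse when it exists) *)
Definition gcEP (a : A) : A := xget 0 [set x | is_gcEP a x].

Definition gcEP_le (a b : A) : Prop :=
  a * gcEP a = b * gcEP a /\ gcEP a * a = gcEP a * b.

Definition corner_inv (p t : A) : Prop :=
  t = p * t * p /\ exists u : A, [/\ u = p * u * p, t * u = p & u * t = p].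

End Defs.

(* Main.v *)
Require Import Defs.
From HB Require Import structures.
From mathcomp Require Import all_boot all_order all_algebra.
From mathcomp Require Import all_classical all_reals.
From mathcomp Require Import topology normedtype sequences exp.
From mathcomp Require Import complex.
Import Order.TTheory GRing.Theory Num.Theory.
Local Open Scope ring_scope.
Import numFieldNormedType.Exports.
Local Open Scope classical_set_scope.

Set Implicit Arguments.
Section S.
Variables (R : realType) (A : banachStarAlgType R).

Lemma bnorm0 : bnorm (0 : A) = 0.
Proof.
have := bnormZ (0 : R[i]) (0 : A); rewrite scale0r => ->.
by rewrite /= expr0n /= addr0 sqrtr0 mul0r.
Qed.

Lemma bnormN (z : A) : bnorm (- z) = bnorm z.
Proof.
have := bnormZ (-1 : R[i]) z; rewrite scaleN1r => ->.
by rewrite /= oppr0 sqrrN expr1n expr0n /= addr0 sqrtr1 mul1r.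
Qed.

Lemma bnorm_ge0 (z : A) : 0 <= bnorm z.
Proof.
have := bnormD z (- z); rewrite subrr bnorm0 bnormN.
by rewrite -mulr2n pmulrn_lge0.
Qed.

Lemma powR_inv_pow (d : R) (n : nat) : (0 < n)%N -> 0 <= d ->
  (d `^ n%:R^-1) ^+ n = d.
Proof.
move=> n0 d0; rewrite -powR_mulrn ?powR_ge0// -powRrM mulVf ?powRr1//.
by rewrite pnatr_eq0 -lt0n.
Qed.

Lemma zero_lemma (c : A) (K M : R) (D : nat -> R) :
  0 <= K -> 0 <= M -> (forall n, 0 <= D n) ->
  (fun n : nat => D n `^ n%:R^-1) @ \oo --> (0 : R) ->
  (forall n, (1 < n)%N -> bnorm c <= K * M ^+ n * D n) -> c = 0.
Proof.
move=> K0 M0 D0 hD H; apply: bnorm_eq0; apply/eqP; rewrite eq_le bnorm_ge0 andbT.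
rewrite leNgt; apply/negP => cpos.
pose eps := (2 * (M + 1))^-1.
have eps0 : 0 < eps by rewrite invr_gt0 mulr_gt0 // ltr_wpDl.
have h1 : \forall t \near \oo, D t `^ t%:R^-1 < eps.
  exact: (cvgr_lt 0 hD).
have h2 : (fun n : nat => K * (2^-1 : R) ^+ n) @ \oo --> (0 : R).
  rewrite -(mulr0 K); apply: cvgMr; apply: cvg_expr.
  by rewrite ger0_norm ?invr_ge0 // invf_lt1 // ltr1n.
have h3 : \forall t \near \oo, K * (2^-1 : R) ^+ t < bnorm c.
  exact: (cvgr_lt 0 h2).
near \oo => n.
have n1 : (1 < n)%N by near: n; exact: nbhs_infty_gt.
have Dn : D n <= eps ^+ n.
  rewrite -(powR_inv_pow _ _ (ltnW n1) (D0 n)) lerXn2r ?nnegrE ?powR_ge0 ?ltW//.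
  by near: n; exact: h1.
have : bnorm c < bnorm c.
  apply: (le_lt_trans (H n n1)); rewrite -mulrA.
  apply: (le_lt_trans _ (_ : K * (2^-1 : R) ^+ n < bnorm c)); last by near: n.
  apply: ler_wpM2l => //; apply: (le_trans (ler_wpM2l _ Dn)); first exact: exprn_ge0.
  rewrite -exprMn; apply: lerXn2r; rewrite ?nnegrE ?mulr_ge0 ?invr_ge0 ?(ltW eps0)//.
    by rewrite mulr_ge0 ?addr_ge0.
  rewrite /eps ler_pdivrMr ?mulr_gt0 ?ltr_wpDl// mulrA mulVf ?pnatr_eq0// mul1r.
  by rewrite lerDl.
by rewrite ltxx.
Unshelve. all: end_near.
Qed.

Lemma bnormX (z : A) n : bnorm (z ^+ n) <= bnorm z ^+ n.
Proof.
elim: n => [|n IH]; first by rewrite !expr0 bnorm1.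
rewrite !exprS; apply: (le_trans (bnormM _ _)).
apply: ler_wpM2l; [exact: bnorm_ge0 | exact: IH].
Qed.

Lemma bnorm3 (u v w : A) : bnorm (u * v * w) <= bnorm u * bnorm v * bnorm w.
Proof.
apply: (le_trans (bnormM _ _)); apply: ler_wpM2r; [exact: bnorm_ge0 | exact: bnormM].
Qed.

Definition Dseq (a x : A) (n : nat) := bnorm (a ^+ n - x * a ^+ n.+1).

Lemma zeroD (a x c u : A) (w : nat -> A) (M : R) :
  (fun n : nat => Dseq a x n `^ n%:R^-1) @ \oo --> (0 : R) -> 0 <= M ->
  (forall n, (1 < n)%N -> bnorm (w n) <= M ^+ n.+1) ->
  (forall n, (1 < n)%N -> c = u * (a ^+ n - x * a ^+ n.+1) * w n) -> c = 0.
Proof.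
move=> hD M0 Hw Hc.
apply: (@zero_lemma c (bnorm u * M) M (Dseq a x)) => //.
- exact: mulr_ge0 (bnorm_ge0 _) M0.
- by move=> n; exact: bnorm_ge0.
move=> n n1; rewrite {1}(Hc n n1); apply: (le_trans (bnorm3 _ _ _)).
apply: (le_trans (ler_wpM2l _ (Hw n n1))).
  exact: mulr_ge0 (bnorm_ge0 _) (bnorm_ge0 _).
rewrite [M ^+ n.+1]exprS /Dseq -!mulrA; apply: ler_wpM2l; first exact: bnorm_ge0.
by rewrite mulrC -mulrA.
Qed.

Lemma qnil_bound (a x c : A) (K : R) :
  (fun n : nat => Dseq a x n `^ n%:R^-1) @ \oo --> (0 : R) -> 1 <= K ->
  (forall n, (0 < n)%N -> bnorm (c ^+ n) <= K * Dseq a x n) -> qnil c.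
Proof.
move=> hD K1 H; rewrite /qnil.
apply: (@squeeze_cvgr _ _ _ _ (fun=> 0) (fun n => K * (Dseq a x n `^ n%:R^-1))).
- near=> n.
  have n0 : (0 < n)%N by near: n; exact: nbhs_infty_gt.
  rewrite powR_ge0 /=.
  have K0 : 0 <= K by apply: le_trans K1.
  apply: (le_trans (ge0_ler_powR _ _ _ (H n n0))).
  + by rewrite invr_ge0.
  + by rewrite nnegrE bnorm_ge0.
  + by rewrite nnegrE mulr_ge0 // bnorm_ge0.
  rewrite powRM ?bnorm_ge0 //; apply: ler_wpM2r; first exact: powR_ge0.
  by apply: ler1_powR => //; rewrite invf_le1 ?ltr0n // ler1n.
- exact: cvg_cst.
- by rewrite -(mulr0 K); apply: cvgMr.
Unshelve. all: end_near.
Qed.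

Lemma powbound (z : A) k n : (k <= n.+1)%N -> bnorm (z ^+ k) <= (bnorm z + 1) ^+ n.+1.
Proof.
move=> kn; apply: (le_trans (bnormX z k)).
have z0 := bnorm_ge0 z.
apply: (@le_trans _ _ ((bnorm z + 1) ^+ k)).
  by apply: lerXn2r; rewrite ?nnegrE ?addr_ge0 // lerDl.
by apply: ler_weXn2l => //; rewrite lerDr.
Qed.

Section Alg.
Variables (a x : A).
Hypothesis hx : is_gcEP a x.

Let H0 : x = a * x ^+ 2. Proof. by case: hx. Qed.
Let hD : (fun n : nat => Dseq a x n `^ n%:R^-1) @ \oo --> (0 : R).
Proof. by case: hx. Qed.

Lemma axx : a * x * x = x. Proof. by rewrite -mulrA -expr2 -H0. Qed.

Lemma gP n : a ^+ n * x ^+ n.+1 = x.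
Proof.
elim: n => [|n IH]; first by rewrite expr0 mul1r expr1.
have -> : x ^+ n.+2 = x ^+ 2 * x ^+ n by rewrite -exprD.
by rewrite exprSr -mulrA [a * (_ * _)]mulrA -H0 -exprS IH.
Qed.

Lemma gQ n : a ^+ n.+1 * x ^+ n.+1 = a * x.
Proof. by rewrite exprS -mulrA gP. Qed.

Lemma xax : x * a * x = x.
Proof.
have : x - x * a * x = 0.
  apply: (@zeroD a x _ 1 (fun n => x ^+ n.+1) (bnorm x + 1) hD).
  - by rewrite addr_ge0 // bnorm_ge0.
  - by move=> n _; apply: powbound.
  move=> n _; rewrite mul1r mulrBl gP.
  by rewrite -[x * a ^+ n.+1 * _]mulrA gQ mulrA.
by move/eqP; rewrite subr_eq0 => /eqP <-.
Qed.

Lemma ee : a * x * (a * x) = a * x.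
Proof. by rewrite mulrA -(mulrA a x a) -mulrA xax. Qed.

Lemma xe : x * (a * x) = x. Proof. by rewrite mulrA xax. Qed.

Lemma omx : (1 - a * x) * x = 0.
Proof. by rewrite mulrBl mul1r axx subrr. Qed.

Lemma oae : (1 - a * x) * a * (a * x) = 0.
Proof.
apply: (@zeroD a x _ (1 - a * x) (fun n => x ^+ n.-1) (bnorm x + 1) hD).
- by rewrite addr_ge0 // bnorm_ge0.
- move=> n _; apply: powbound; case: n => // n; exact: leq_trans (leqnSn n) (leqnSn _).
case=> [|[|m]] // _ /=.
have step : a * (a * x) = a ^+ m.+2 * x ^+ m.+1 by rewrite -(gQ m) mulrA -exprS.
rewrite mulrBr [(1 - a * x) * (x * _)]mulrA omx mul0r subr0.
by rewrite -mulrA step mulrA.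
Qed.

Lemma ae : a * (a * x) = a * x * a * (a * x).
Proof.
by move/eqP: oae; rewrite !mulrBl !mul1r subr_eq0 => /eqP.
Qed.

Lemma xae : x * a * (a * x) = a * x.
Proof.
have : a * x - x * a * (a * x) = 0.
  apply: (@zeroD a x _ 1 (fun n => x ^+ n) (bnorm x + 1) hD).
  - by rewrite addr_ge0 // bnorm_ge0.
  - by move=> n _; apply: powbound.
  case=> [|m] // _.
  have s1 : a ^+ m.+1 * x ^+ m.+1 = a * x := gQ m.
  have s2 : x * a ^+ m.+2 * x ^+ m.+1 = x * a * (a * x).
    by rewrite -(gQ m) !mulrA -(mulrA x a) -exprS.
  by rewrite mul1r mulrBl s1 s2.
by move/eqP; rewrite subr_eq0 => /eqP <-.
Qed.

Lemma oaoa : (1 - a * x) * a * (1 - a * x) = (1 - a * x) * a.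
Proof. by rewrite mulrBr oae mulr1 subr0. Qed.

Lemma qnil_a : qnil ((1 - a * x) * a * (1 - a * x)).
Proof.
apply: (@qnil_bound a x _ (bnorm (1 - a * x) + 1) hD).
  by rewrite lerDr bnorm_ge0.
case=> // n _.
have hc : ((1 - a * x) * a * (1 - a * x)) ^+ n.+1 = (1 - a * x) * a ^+ n.+1.
  elim: n => [|n IH]; first by rewrite !expr1 oaoa.
  by rewrite exprS IH oaoa mulrA oaoa -mulrA -exprS.
have hd : (1 - a * x) * a ^+ n.+1 = (1 - a * x) * (a ^+ n.+1 - x * a ^+ n.+2).
  by rewrite mulrBr mulrA omx mul0r subr0.
rewrite hc hd; apply: (le_trans (bnormM _ _)); rewrite /Dseq.
apply: ler_wpM2r; first exact: bnorm_ge0.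
by rewrite lerDl.
Qed.

Lemma killL u : u * (a * x) = 0 -> u * a * (a * x) = 0.
Proof. by move=> Hu; rewrite -mulrA ae !mulrA -(mulrA u a x) Hu !mul0r. Qed.

End Alg.

Lemma sum4 (u v c : A) :
  u * c * u + u * c * v + v * c * u + v * c * v = (u + v) * c * (u + v).
Proof.
rewrite mulrDl !mulrDr !mulrDl !addrA; congr (_ + _); by rewrite addrAC.
Qed.

Lemma star0 : star (0 : A) = 0.
Proof.
have h := starD (0 : A) 0; rewrite addr0 in h.
by rewrite -{1}(addrK (star (0:A)) (star 0)) -h subrr.
Qed.

Lemma starB (u v : A) : star (u - v) = star u - star v.
Proof.
have h := starD (u - v) v; rewrite subrK in h.
by rewrite h addrK.
Qed.


Lemma pe (b y e z : A) : is_gcEP b y ->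
  (forall n, (0 < n)%N -> e = b ^+ n * e * z ^+ n) -> (1 - b * y) * e = 0.
Proof.
move=> hy He.
have hD : (fun n : nat => Dseq b y n `^ n%:R^-1) @ \oo --> (0 : R) by case: hy.
pose M := bnorm e + bnorm z + 1.
have e0 := bnorm_ge0 e; have z0 := bnorm_ge0 z.
apply: (@zeroD b y _ (1 - b * y) (fun n => e * z ^+ n) M hD).
- by rewrite /M !addr_ge0.
- move=> n _; apply: (le_trans (bnormM _ _)); rewrite exprS.
  apply: ler_pM => //; first exact: bnorm_ge0.
  + by rewrite /M -addrA lerDl addr_ge0.
  + apply: (le_trans (bnormX _ _)); apply: lerXn2r; rewrite ?nnegrE ?addr_ge0 //.
    by rewrite /M addrAC lerDr addr_ge0.
move=> n n1; rewrite mulrBr [(1 - b * y) * (y * _)]mulrA (@omx b y hy) mul0r subr0.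
by rewrite -!mulrA [b ^+ n * _]mulrA -He // ltnW.
Qed.
End S.
Unset Implicit Arguments.

Theorem theorem4p4 (R : realType) (A : banachStarAlgType R) (a b : A)
  (ha : has_gcEP a) (hb : has_gcEP b) :
  gcEP_le a b <->
  (let e1 := a * gcEP a in
   exists e2 : A,
     e2 = star e2 /\ e2 = e2 * e2 /\ e1 * e2 = 0 /\ e2 * e1 = 0 /\
     let e3 := 1 - e1 - e2 in
     exists (t1 s1 s2 n1 n2 n3 n4 t3 t4 t5 : A),
       (* matrix form of a w.r.t. e = {e1, e2, e3} *)
       (e1 * a * e1 = t1 /\ e1 * a * e2 = s1 /\ e1 * a * e3 = s2 /\
        e2 * a * e1 = 0  /\ e2 * a * e2 = n1 /\ e2 * a * e3 = n2 /\
        e3 * a * e1 = 0  /\ e3 * a * e2 = n3 /\ e3 * a * e3 = n4) /\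
       (* matrix form of b w.r.t. e = {e1, e2, e3} *)
       (e1 * b * e1 = t1 /\ e1 * b * e2 = s1 /\ e1 * b * e3 = s2 /\
        e2 * b * e1 = 0  /\ e2 * b * e2 = t3 /\ e2 * b * e3 = t4 /\
        e3 * b * e1 = 0  /\ e3 * b * e2 = 0  /\ e3 * b * e3 = t5) /\
       corner_inv e1 t1 /\ corner_inv e2 t3 /\
       qnil (n1 + n2 + n3 + n4) /\ qnil t5).
Proof.
have hxa : is_gcEP a (gcEP a) := xgetPex 0 ha.
have hyb : is_gcEP b (gcEP b) := xgetPex 0 hb.
rewrite /gcEP_le; cbv zeta.
set x := gcEP a; set y := gcEP b.
have hxa' : is_gcEP a x := hxa.
have hyb' : is_gcEP b y := hyb.
clearbody x y.
clear hxa hyb; rename hxa' into hxa; rename hyb' into hyb.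
have Hsa : star (a * x) = a * x by case: hxa.
have Hsb : star (b * y) = b * y by case: hyb.
have hex : a * x * x = x := axx hxa.
have hxe : x * (a * x) = x := xe hxa.
split.
-
  move=> [Hl1 Hl2].
  have gb : forall n, a ^+ n.+1 * (a * x) * x ^+ n.+1 = a * x.
    move=> n; rewrite mulrA -exprSr -mulrA -exprS; exact: gQ hxa n.+1.
  set e := a * x in Hsa Hl1 gb *.
  set p := b * y in Hsb *.
  have F_ee : e * e = e := ee hxa.
  have F_ex : e * x = x := axx hxa.
  have F_xe : x * e = x := xe hxa.
  have F_ae : a * e = e * a * e := ae hxa.
  have F_xae : x * a * e = e := xae hxa.
  have kill_a : forall u, u * e = 0 -> u * a * e = 0 := killL hxa.
  have F_pp : p * p = p := ee hyb.
  have F_py : p * y = y := axx hyb.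
  have F_yp : y * p = y := xe hyb.
  have F_bp : b * p = p * b * p := ae hyb.
  have F_ybp : y * b * p = p := xae hyb.
  have kill_b : forall u, u * p = 0 -> u * b * p = 0 := killL hyb.
  have qa : qnil ((1 - e) * a * (1 - e)) := qnil_a hxa.
  have qb : qnil ((1 - p) * b * (1 - p)) := qnil_a hyb.
  have F_omp : (1 - p) * y = 0 := omx hyb.
  have pE : p = b * y := erefl.
  have axe : a * x = e := erefl.
  clearbody e p.
  have F_be : b * e = a * e.
    by rewrite -{1}F_xae !mulrA -Hl1 -F_ae.
  have F_eb : e * b = e * a by rewrite {1}Hl1 -mulrA -Hl2 mulrA -Hl1.
  have bn : forall n, b ^+ n * e = a ^+ n * e.
    elim=> [|n IH]; first by rewrite !expr0.
    by rewrite !exprSr -!mulrA F_be F_ae !mulrA IH.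
  have pe1 : p * e = e.
    have h := @pe _ _ b y e x hyb.
    have : (1 - p) * e = 0.
      rewrite pE; apply: h; case=> [//|m] _; by rewrite bn gb.
    by move/eqP; rewrite mulrBl mul1r subr_eq0 => /eqP <-.
  have e1p : e * p = e.
    by have := congr1 star pe1; rewrite starM Hsa Hsb.
  have oe : (1 - p) * e = 0 by rewrite mulrBl mul1r pe1 subrr.
  have op : (1 - p) * p = 0 by rewrite mulrBl mul1r F_pp subrr.
  have bex : b * e * x = e.
    by rewrite F_be F_ae -mulrA F_ex -mulrA axe F_ee.
  have ye : y * e = x.
    by rewrite -{1}bex !mulrA -{1}pe1 mulrA F_ybp pe1 F_ex.
  have e3E : 1 - e - (p - e) = 1 - p by rewrite opprB addrA subrK.
  have fe : (p - e) * e = 0 by rewrite mulrBl pe1 F_ee subrr.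
  have ef : e * (p - e) = 0 by rewrite mulrBr e1p F_ee subrr.
  have ff : (p - e) * (p - e) = p - e.
    by rewrite mulrBl !mulrBr F_pp pe1 e1p F_ee subrr subr0.
  have fs : p - e = star (p - e) by rewrite starB Hsb Hsa.
  have fp : (p - e) * p = p - e by rewrite mulrBl F_pp e1p.
  have pf : p * (p - e) = p - e by rewrite mulrBr F_pp pe1.
  have gf : p - e + (1 - p) = 1 - e by rewrite addrC addrA subrK.
  exists (p - e).
  rewrite e3E.
  set f := p - e in fe ef ff fs fp pf gf *.
  have fx : f * x = 0 by rewrite -F_ex mulrA fe mul0r.
  have fyf : f * y * f = f * y.
    by rewrite /f mulrBr -/f -!mulrA F_yp ye fx subr0.
  have fbe : f * b * e = 0 by rewrite -mulrA F_be mulrA kill_a.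
  have obe : (1 - p) * b * e = 0 by rewrite -mulrA F_be mulrA kill_a.
  have fbf : f * b * f = f * b * p by rewrite /f mulrBr -/f fbe subr0.
  split; first exact: fs.
  split; first by rewrite ff.
  split; first exact: ef.
  split; first exact: fe.
  exists (e * a * e), (e * a * f), (e * a * (1 - p)), (f * a * f), (f * a * (1 - p)),
    ((1 - p) * a * f), ((1 - p) * a * (1 - p)), (f * b * f), (f * b * (1 - p)),
    ((1 - p) * b * (1 - p)).
  split.
    split; first by [].
    split; first by [].
    split; first by [].
    split; first exact: kill_a.
    split; first by [].
    split; first by [].
    split; first exact: kill_a.
    by split.
  split.
    split; first by rewrite F_eb.
    split; first by rewrite F_eb.
    split; first by rewrite F_eb.
    split; first exact: fbe.
    split; first by [].
    split; first by [].
    split; first exact: obe.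
    split; first by rewrite /f mulrBr -/f obe subr0 (kill_b _ op).
    by [].
  split.
    split.
      by rewrite !mulrA F_ee -[e * a * e * e]mulrA F_ee.
    exists x; split.
    - by rewrite F_ex F_xe.
    - by rewrite -mulrA F_ex -mulrA axe F_ee.
    - by rewrite !mulrA F_xe F_xae.
  split.
    split.
      by rewrite !mulrA ff -[f * b * f * f]mulrA ff.
    exists (f * y * f); split.
    - by rewrite !mulrA ff -[f * y * f * f]mulrA ff.
    - rewrite fbf fyf !mulrA -[f * b * p * f]mulrA pf fbf.
      by rewrite -[f * b * p * y]mulrA F_py -mulrA -pE fp.
    - rewrite fyf fbf !mulrA fyf -(mulrA f y) -(mulrA f (y * b)) F_ybp fp.
      by [].
  split; last exact: qb.
  have sumE : f * a * f + f * a * (1 - p) + (1 - p) * a * f + (1 - p) * a * (1 - p)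
      = (f + (1 - p)) * a * (f + (1 - p)).
    exact: sum4.
  by rewrite sumE gf.
-
  set e := a * x.
  move=> [e2 [_ [_ [_ [_ [t1 [s1 [s2 [n1 [n2 [n3 [n4 [t3 [t4 [t5 rest]]]]]]]]]]]]]]].
  move: rest => [[A1 [A2 [A3 [A4 [A5 [A6 [A7 [A8 A9]]]]]]]] [[B1 [B2 [B3 [B4 [B5 [B6 [B7 [B8 B9]]]]]]]] _]].
  have one : e + e2 + (1 - e - e2) = 1.
    by rewrite -[1 - e - e2]addrA -opprD addrC addNKr.
  set e3 := 1 - e - e2 in A3 A6 A7 A8 A9 B3 B6 B7 B8 B9 one.
  have eE : e = a * x := erefl.
  have ex' : e * x = x := hex.
  have xe' : x * e = x := hxe.
  clearbody e3 e.
  have aebe : a * e = b * e.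
    rewrite -(mul1r (a * e)) -(mul1r (b * e)) -one !mulrDl !mulrA.
    by rewrite A1 A4 A7 B1 B4 B7.
  have eaeb : e * a = e * b.
    rewrite -(mulr1 (e * a)) -(mulr1 (e * b)) -one !mulrDr.
    by rewrite A1 A2 A3 B1 B2 B3.
  split.
    by rewrite {1}eE -ex' mulrA aebe -mulrA ex'.
  by rewrite -xe' -mulrA eaeb mulrA.
Qed.
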